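(* For every Gauss diagram $D$ consisting of $m>0$ signed dashed arrows (and no other arrows), there exist a fractional twist lattice $\Phi_D:\mathbb{Z}^m\to\mathscr{K}$, $\alpha\in(\mathbb{Z}_{\ge0})^m$ and $\nu\in\{+,-\}^m$ such that $I\big(\partial^{\nu\alpha}\Phi_D(\vec 0)\big)=(-1)^{\#(-)}\cdot D$, where $\#(-)$ is the number of arrows of $D$ signed $-$.
   Context: Gauss diagrams: a long virtual knot is encoded by the real line $\mathbb{R}$ with signed arrows, one for each classical crossing (arrow between the two preimages $x<y$, pointing right if the overcrossing is at $x$, left otherwise, labelled with the writhe sign); $\mathscr{D}$ is the set of such diagrams up to orientation-preserving homeomorphism of $\mathbb{R}$ and $\mathscr{K}$ the set of long virtual knots. A dashed arrow represents a semi-virtual crossing: a diagram with a dashed arrow equals the diagram with that arrow solid minus the diagram with that arrow deleted. $\mathscr{A}$ is the free abelian group generated by Gauss diagrams all of whose arrows are dashed, and $i$ makes every arrow dashed. $I:\mathbb{Z}[\mathscr{D}]\to\mathscr{A}$ is $I(D)=\sum_{D'\subset D} i(D')$, summing over all subdiagrams obtained by deleting a subset of arrows; it is an isomorphism and descends to $\mathbb{Z}[\mathscr{K}]\to\mathscr{P}$ ($\mathscr{P}$ the quotient of $\mathscr{A}$ by the Polyak relations); the equality is understood there. Discrete derivatives: for $\Phi:\mathbb{Z}^m\to\mathbb{Z}[\mathscr{K}]$, $(\partial_i^+\Phi)(z)=\Phi(z+e_i)-\Phi(z)$, $(\partial_i^-\Phi)(z)=\Phi(z)-\Phi(z-e_i)$;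 $\partial_i^{\pm a}$ is the $a$-fold iterate, $\partial^{\nu\alpha}=\partial_1^{\nu_1\alpha_1}\cdots\partial_m^{\nu_m\alpha_m}$. Fractional twist lattices: a proper pair is a pair of disjoint open intervals $A<A'$ of $\mathbb{R}$ such that every arrow with an endpoint in $A\cup A'$ has one endpoint in each. For $Y\in\{S,B\}$, $Z\in\{L,R\}$, a fractional twist sequence of type $FYZ$ with pair $(A,A')$ places at $k\in\mathbb{Z}$ exactly $|k|$ arrows with endpoints $a_1<\dots<a_{|k|}$ in $A$, $b_1<\dots<b_{|k|}$ in $A'$, arrow $i$ joining $a_i$ to $b_i$ ($Y=S$) or $b_{|k|+1-i}$ ($Y=B$), all pointing in direction $Z$ and signed $+$ if $k\ge0$, all pointing opposite to $Z$ and signed $-$ if $k<0$. A fractional twist lattice of dimension $m$ is $\Phi:\mathbb{Z}^m\to\mathscr{K}$ given by a fixed Gauss diagram $G$ and disjoint proper pairs $(A_i,A_i')$ free of endpoints of $G$, with $\Phi(k_1,\dots,k_m)$ equal to $G$ plus, in each $(A_i,A_i')$, the $k_i$-th configuration of a fractional twist sequence of some type $FYZ$. *)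

(* Defs.v *)
From HB Require Import structures.
From mathcomp Require Import all_boot all_order all_algebra.
From mathcomp Require Import boolp.
Set Implicit Arguments. Unset Strict Implicit. Unset Printing Implicit Defensive.
Import Order.TTheory GRing.Theory Num.Theory.
Local Open Scope ring_scope.

(* Endpoints are placed at rational points of R (every finite         *)
(* configuration is homeomorphic to a rational one).                  *)
(* An arrow is (tail, head, sign); the tail is the overcrossing       *)
(* preimage, the head the undercrossing one (so the arrow points       *)
(* right iff tail < head).  sign = true means +, false means -.      *)
Definition arrow := (rat * rat * bool)%type.
Definition tl (a : arrow) : rat := a.1.1.
Definition hd (a : arrow) : rat := a.1.2.
Definition sgn (a : arrow) : bool := a.2.

Definition diagram := seq arrow.

Definition endpoints (D : diagram) : seq rat :=
  flatten [seq [:: tl a; hd a] | a <- D].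

Definition wf_diagram (D : diagram) : bool := uniq (endpoints D).

Definition amap (f : rat -> rat) (a : arrow) : arrow := (f (tl a), f (hd a), sgn a).

(* equality in the set of Gauss diagrams: up to orientation-preserving
   homeomorphism of R (= an order-preserving map on the endpoints) *)
Definition gd_iso (D1 D2 : diagram) : Prop :=
  exists f : rat -> rat,
    {in endpoints D1 &, forall x y, x < y -> f x < f y} /\
    perm_eq (map (amap f) D1) D2.

(* Formal integer combinations of diagrams.  The same type represents *)
(* Z[D] (solid arrows) and A (all arrows dashed; i is the identity on *)
(* representations).  Two combinations are equal iff they have the   *)
(* same coefficient on every diagram class.                           *)
Definition comb := seq (int * diagram).

Definition coef (X : comb) (D : diagram) : int :=
  \sum_(p <- X | `[< gd_iso p.2 D >]) p.1.

Definition comb_eq (X Y : comb) : Prop := forall D, coef X D = coef Y D.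

Definition comb_opp (X : comb) : comb := [seq (- p.1, p.2) | p <- X].
Definition comb_scale (c : int) (X : comb) : comb := [seq (c * p.1, p.2) | p <- X].

Fixpoint subdiagrams (D : diagram) : seq diagram :=
  match D with
  | [::] => [:: [::]]
  | a :: D' => let Ss := subdiagrams D' in Ss ++ map (cons a) Ss
  end.

(* I : Z[D] -> A,  I(D) = sum_{D' subset D} i(D') *)
Definition Imap (X : comb) : comb :=
  flatten [seq [seq (p.1, E) | E <- subdiagrams p.2] | p <- X].

Definition between (x y z : rat) : bool := (Num.min x z < y) && (y < Num.max x z).

Definition adjacent (D : diagram) (x z : rat) : bool :=
  all (fun y => ~~ between x y z) (endpoints D).

Definition R1move (D1 D2 : diagram) : Prop :=
  exists a : arrow, D2 = a :: D1 /\ wf_diagram D2 /\ adjacent D1 (tl a) (hd a).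

Definition R2move (D1 D2 : diagram) : Prop :=
  exists a b : arrow, D2 = a :: b :: D1 /\ wf_diagram D2 /\ sgn a != sgn b /\
    adjacent D2 (tl a) (tl b) /\ adjacent D2 (hd a) (hd b).

(* Omega3: arrows x : T->M, y : T->B, z : M->B (top, middle, bottom strands),
   the two endpoints on each strand adjacent; the configuration must be a
   planar triangle, and the move reverses the order on each strand. *)
Definition R3move (D1 D2 : diagram) : Prop :=
  exists (x y z : arrow) (D0 : diagram),
    D1 = [:: x; y; z] ++ D0 /\ wf_diagram D1 /\
    adjacent D1 (tl x) (tl y) /\ adjacent D1 (hd x) (tl z) /\
    adjacent D1 (hd y) (hd z) /\
    ((tl x < tl y) == (hd x < tl z)) = (sgn y == sgn z) /\
    ((tl x < tl y) == (hd y < hd z)) = (sgn x == sgn z) /\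
    D2 = [:: (tl y, tl z, sgn x); (tl x, hd z, sgn y); (hd x, hd y, sgn z)] ++ D0.

Definition reid_move (D1 D2 : diagram) : Prop :=
  [/\ wf_diagram D1 & R1move D1 D2 \/ R2move D1 D2 \/ R3move D1 D2].

(* Equality in P = A / (Polyak relations), where the Polyak relations are
   the subgroup I(span{D1 - D2 : D1, D2 related by a Reidemeister move}). *)
Definition P_eq (X Y : comb) : Prop :=
  exists rels : seq (int * (diagram * diagram)),
    (forall r, r \in rels -> reid_move r.2.1 r.2.2) /\
    comb_eq (X ++ comb_opp Y)
      (flatten [seq comb_scale r.1 (Imap [:: (1, r.2.1)] ++ comb_opp (Imap [:: (1, r.2.2)]))
               | r <- rels]).

Definition shift (m : nat) (z : 'I_m -> int) (i : 'I_m) (d : int) : 'I_m -> int :=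
  fun j => if j == i then z j + d else z j.

Definition dplus (m : nat) (i : 'I_m) (Phi : ('I_m -> int) -> comb) : ('I_m -> int) -> comb :=
  fun z => Phi (shift z i 1) ++ comb_opp (Phi z).

Definition dminus (m : nat) (i : 'I_m) (Phi : ('I_m -> int) -> comb) : ('I_m -> int) -> comb :=
  fun z => Phi z ++ comb_opp (Phi (shift z i (-1))).

(* nu i = true means +, false means - ;  d^{nu alpha} *)
Definition dpow (m : nat) (nu : 'I_m -> bool) (alpha : 'I_m -> nat)
    (Phi : ('I_m -> int) -> comb) : ('I_m -> int) -> comb :=
  foldr (fun i F => iter (alpha i) (if nu i then dplus i else dminus i) F) Phi (enum 'I_m).

(* A pair of intervals (A, A') is encoded as (a1, a2, b1, b2) with    *)
(* A = (a1, a2), A' = (b1, b2).                                       *)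
(* Y = true : type S, Y = false : type B.                             *)
(* Z = true : type R, Z = false : type L.                             *)
Definition ipair := (rat * rat * rat * rat)%type.

Definition twist_arrows (A : ipair) (Y Z : bool) (k : int) : diagram :=
  let n := `|k|%N in
  let a1 := A.1.1.1 in let a2 := A.1.1.2 in
  let b1 := A.1.2 in let b2 := A.2 in
  let pos (lo hi : rat) (j : nat) := lo + j%:R * (hi - lo) / (n.+1)%:R in
  [seq let aj := pos a1 a2 j in
       let bj := pos b1 b2 (if Y then j else (n.+1 - j)%N) in
       if Z == (0 <= k) then (aj, bj, 0 <= k) else (bj, aj, 0 <= k)
  | j <- iota 1 n].

Definition ftl (m : nat) (G : diagram) (A : 'I_m -> ipair) (Y Z : 'I_m -> bool)
    (k : 'I_m -> int) : diagram :=
  G ++ flatten [seq twist_arrows (A i) (Y i) (Z i) (k i) | i <- enum 'I_m].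

Definition in_open (lo hi x : rat) : bool := (lo < x) && (x < hi).

Definition disj_open (l1 h1 l2 h2 : rat) : bool := (h1 <= l2) || (h2 <= l1).

Definition ftl_data (m : nat) (G : diagram) (A : 'I_m -> ipair) : Prop :=
  [/\ wf_diagram G,
      (forall i, let: (a1, a2, b1, b2) := A i in [&& a1 < a2, a2 <= b1 & b1 < b2]),
      (forall i j, i != j ->
         let: (a1, a2, b1, b2) := A i in let: (c1, c2, d1, d2) := A j in
         [&& disj_open a1 a2 c1 c2, disj_open a1 a2 d1 d2,
             disj_open b1 b2 c1 c2 & disj_open b1 b2 d1 d2]) &
      (forall i x, x \in endpoints G ->
         let: (a1, a2, b1, b2) := A i in ~~ in_open a1 a2 x && ~~ in_open b1 b2 x)].

Definition is_ftl (m : nat) (Phi : ('I_m -> int) -> diagram) : Prop :=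
  exists (G : diagram) (A : 'I_m -> ipair) (Y Z : 'I_m -> bool),
    ftl_data G A /\ forall k, Phi k = ftl G A Y Z k.

Definition num_neg (D : diagram) : nat := count (fun a => ~~ sgn a) D.

(* Main.v *)
Require Import Defs.
From HB Require Import structures.
From mathcomp Require Import all_boot all_order all_algebra.
From mathcomp Require Import boolp.
From mathcomp Require Import zify ring lra.
Import Order.TTheory GRing.Theory Num.Theory.
Local Open Scope ring_scope.

Definition ev (W : diagram -> int) (X : comb) : int := \sum_(p <- X) p.1 * W p.2.
Definition IW (W : diagram -> int) (d : diagram) : int := \sum_(d' <- subdiagrams d) W d'.

Lemma ev_cat W X Y : ev W (X ++ Y) = ev W X + ev W Y.
Proof. by rewrite /ev big_cat. Qed.
Lemma ev_opp W X : ev W (comb_opp X) = - ev W X.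
Proof. by rewrite /ev big_map -sumrN; apply: eq_bigr => p _; rewrite mulNr. Qed.
Lemma ev_Imap W X : ev W (Imap X) = ev (IW W) X.
Proof.
elim: X => [|p X IH]; first by rewrite /ev /Imap !big_nil.
rewrite /Imap /= -/(Imap X) ev_cat IH /ev big_cons big_map /IW mulr_sumr.
by [].
Qed.

Lemma sum_sub_cat (w : diagram -> int) X Y :
  \sum_(d <- subdiagrams (X ++ Y)) w d =
  \sum_(d1 <- subdiagrams X) \sum_(d2 <- subdiagrams Y) w (d1 ++ d2).
Proof.
elim: X w => [|a X IH] w /=; first by rewrite big_seq1.
by rewrite !big_cat /= !big_map IH (IH (fun d => w (a :: d))).
Qed.

Lemma mid (p e : rat) : p - e + 1%:R * (p + e - (p - e)) / 2%:R = p.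
Proof. field; first by []. Qed.

Definition a0 : arrow := (0, 0, true).
Definition sv (D : diagram) (i : nat) : int := if sgn (nth a0 D i) then 1 else -1.
Definition good {m} (D : diagram) (z : 'I_m -> int) := forall i : 'I_m, z i = 0 \/ z i = sv D i.

Lemma mem_drop_enum m k (i : 'I_m) : (i \in drop k (enum 'I_m)) = (k <= i)%N.
Proof.
rewrite -(mem_map val_inj) map_drop val_enum_ord drop_iota add0n mem_iota.
have := ltn_ord i; case: (leqP k i) => /= H1 H2; lia.
Qed.
Lemma mem_take_enum m k (i : 'I_m) : (i \in take k (enum 'I_m)) = (i < k)%N.
Proof.
rewrite -(mem_map val_inj) map_take val_enum_ord take_iota mem_iota /=.
have := ltn_ord i; lia.
Qed.

Lemma filt_nil m (z : 'I_m -> int) (l : seq 'I_m) :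
  (forall i, i \in l -> z i = 0) -> [seq i <- l | z i != 0] = [::].
Proof.
elim: l => //= x l IH H; rewrite H ?mem_head // eqxx /= IH // => y Hy.
by apply: H; rewrite in_cons Hy orbT.
Qed.

Lemma claim m (D : diagram) (Phi : ('I_m -> int) -> diagram) alpha nu W
  (HD : size D = m)
  (HPhi : forall z, good D z -> Phi z = [seq nth a0 D i | i : 'I_m <- enum 'I_m & z i != 0])
  (Ha : forall i, alpha i = 1%N) (Hn : forall i : 'I_m, nu i = sgn (nth a0 D i)) :
  forall n, (n <= m)%N -> forall z, good D z -> (forall i : 'I_m, (m - n <= i)%N -> z i = 0) ->
  ev (IW W) (foldr (fun i F => iter (alpha i) (if nu i then dplus i else dminus i) F)
               (fun k => [:: (1, Phi k)]) (drop (m - n) (enum 'I_m)) z)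
  = (-1) ^+ count (fun a => ~~ sgn a) (drop (m - n) D) *
    \sum_(d <- subdiagrams (Phi z)) W (d ++ drop (m - n) D).
Proof.
elim=> [|n IH] Hn' z Hz Hz0.
  rewrite subn0 !drop_oversize ?size_enum_ord ?HD // /= expr0 mul1r.
  rewrite /ev big_seq1 mul1r /IW; apply: eq_bigr => d _; by rewrite cats0.
have Hj : (m - n.+1 < m)%N by lia.
set j := (m - n.+1)%N in Hj Hz0 *.
have Ej : (m - n)%N = j.+1 by rewrite /j subnSK.
set i0 := Ordinal Hj.
have De : drop j (enum 'I_m) = i0 :: drop j.+1 (enum 'I_m).
  by rewrite (drop_nth i0) ?size_enum_ord // -[X in nth _ _ X]/(nat_of_ord i0) nth_ord_enum.
have Dd : drop j D = nth a0 D j :: drop j.+1 D by rewrite (drop_nth a0) ?HD.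
have Hzi0 : z i0 = 0 by apply: Hz0; rewrite /= leqnn.
set s := sv D j.
set z' := shift z i0 s.
have Hz' : good D z'.
  move=> i; rewrite /z' /shift; case: eqP => [->|_]; last exact: Hz.
  by right; rewrite Hzi0 add0r.
have Hz0' : forall i : 'I_m, (m - n <= i)%N -> z' i = 0.
  move=> i Hi; rewrite /z' /shift; case: eqP => [E|_].
    by move: Hi; rewrite E Ej /= ltnn.
  by apply: Hz0; rewrite Ej in Hi; rewrite /j; lia.
have Hz0s : forall i : 'I_m, (m - n <= i)%N -> z i = 0.
  by move=> i Hi; apply: Hz0; rewrite Ej in Hi; rewrite /j; lia.
have HP : Phi z' = Phi z ++ [:: nth a0 D j].
  rewrite !HPhi // -(cat_take_drop j (enum 'I_m)) De !filter_cat !map_cat /=.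
  have Ez' : z' i0 = s by rewrite /z' /shift eqxx Hzi0 add0r.
  have Hs0 : (s != 0) by rewrite /s /sv; case: ifP.
  rewrite Hzi0 eqxx Ez' Hs0 /=.
  have F1 : [seq i <- drop j.+1 (enum 'I_m) | z i != 0] = [::].
    by apply: filt_nil => i; rewrite mem_drop_enum => Hi; apply: Hz0s; by rewrite Ej.
  have F2 : [seq i <- drop j.+1 (enum 'I_m) | z' i != 0] = [::].
    by apply: filt_nil => i; rewrite mem_drop_enum => Hi; apply: Hz0'; by rewrite Ej.
  rewrite F1 F2 /= cats0; congr (_ ++ _); congr map; apply: eq_in_filter => i.
  rewrite mem_take_enum /z' /shift => Hi; case: (i =P i0) => // E.
  by move: Hi; rewrite E /= ltnn.
rewrite De Dd /= Ha /= Hn.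
have IH1 := IH (ltnW Hn') z Hz Hz0s.
have IH2 := IH (ltnW Hn') z' Hz' Hz0'.
rewrite Ej in IH1 IH2.
rewrite HP sum_sub_cat /= in IH2.
have E2 : forall d1 : diagram, \sum_(d2 <- [:: [::]; [:: nth a0 D j]]) W ((d1 ++ d2) ++ drop j.+1 D)
   = W (d1 ++ drop j.+1 D) + W (d1 ++ nth a0 D j :: drop j.+1 D).
  by move=> d1; rewrite big_cons big_seq1 cats0 -catA.
rewrite (eq_bigr _ (fun d1 _ => E2 d1)) big_split /= in IH2.
have Hs1 : sgn (nth a0 D j) -> s = 1 by rewrite /s /sv => ->.
have Hs2 : ~~ sgn (nth a0 D j) -> s = -1 by rewrite /s /sv => /negbTE ->.
case Esg: (sgn (nth a0 D j)) => /=.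
- have -> : forall F, dplus i0 F z = F (shift z i0 1) ++ comb_opp (F z) by [].
  rewrite ev_cat ev_opp.
  have -> : shift z i0 1 = z' by rewrite /z' Hs1.
  rewrite IH1 IH2 /= add0n.
  ring.
- have -> : forall F, dminus i0 F z = F z ++ comb_opp (F (shift z i0 (-1))) by [].
  rewrite ev_cat ev_opp.
  have -> : shift z i0 (-1) = z' by rewrite /z' Hs2 ?Esg.
  rewrite IH1 IH2 /= add1n exprS.
  ring.
Qed.

Fixpoint minl (s : seq rat) : rat := if s is x :: s' then Num.min x (minl s') else 1.

Lemma minl_pos s : all (fun g => 0 < g) s -> 0 < minl s.
Proof. elim: s => //= x s IH /andP [Hx Hs]; by rewrite lt_min Hx IH. Qed.
Lemma minl_le s x : x \in s -> minl s <= x.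
Proof.
elim: s => //= y s IH; rewrite in_cons => /orP [/eqP ->|H].
  by rewrite ge_min lexx.
by rewrite ge_min IH ?orbT.
Qed.

Definition gaps (D : diagram) : seq rat :=
  [seq g <- [seq `|x - y| | x <- endpoints D, y <- endpoints D] | 0 < g].
Definition eps (D : diagram) : rat := minl (gaps D) / 4.

Lemma eps_pos D : 0 < eps D.
Proof. rewrite /eps divr_gt0 // minl_pos //; apply: filter_all. Qed.

Lemma eps_gap D x y : x \in endpoints D -> y \in endpoints D -> x != y ->
  4 * eps D <= `|x - y|.
Proof.
move=> Hx Hy Hxy; rewrite /eps mulrC divfK //; apply: minl_le.
rewrite mem_filter normr_gt0 subr_eq0 Hxy /=.
exact: (allpairs_f (fun x y => `|x - y|) Hx Hy).
Qed.

Lemma disj_gap D x y : x \in endpoints D -> y \in endpoints D -> x != y ->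
  disj_open (x - eps D) (x + eps D) (y - eps D) (y + eps D).
Proof.
move=> Hx Hy Hxy; have := eps_gap D x y Hx Hy Hxy; have := eps_pos D.
rewrite ler_normr /disj_open => He /orP [H|H]; apply/orP; [right|left]; lra.
Qed.

Lemma ord_gap D x y : x \in endpoints D -> y \in endpoints D -> x < y ->
  x + eps D <= y - eps D.
Proof.
move=> Hx Hy Hxy; have Hn : x != y by rewrite lt_eqF.
have := eps_gap D x y Hx Hy Hn; have := eps_pos D.
rewrite ler_normr => He /orP [H|H]; lra.
Qed.

Lemma endpoints_cons a D : endpoints (a :: D) = tl a :: hd a :: endpoints D.
Proof. by []. Qed.

Definition pe (D : diagram) (i : nat) (b : bool) : rat := nth 0 (endpoints D) (i.*2 + b).

Lemma size_endpoints D : size (endpoints D) = (size D).*2.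
Proof. by elim: D => //= a D IH; rewrite -/(endpoints D) IH doubleS. Qed.

Lemma pe_tl D i : (i < size D)%N -> pe D i false = tl (nth a0 D i).
Proof.
rewrite /pe addn0; elim: D i => // a D IH [|i] //= H.
by rewrite -/(endpoints D) IH.
Qed.
Lemma pe_hd D i : (i < size D)%N -> pe D i true = hd (nth a0 D i).
Proof.
rewrite /pe addn1; elim: D i => // a D IH [|i] //= H.
by rewrite -/(endpoints D) IH.
Qed.

Lemma pe_mem D i b : (i < size D)%N -> pe D i b \in endpoints D.
Proof. move=> H; rewrite /pe mem_nth // size_endpoints; case: b => /=; lia. Qed.

Lemma pe_neq D i j bi bj : wf_diagram D -> (i < size D)%N -> (j < size D)%N ->
  (i != j) || (bi != bj) -> pe D i bi != pe D j bj.
Proof.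
move=> Hw Hi Hj; rewrite /pe nth_uniq ?size_endpoints //.
- by case: bi; case: bj => /=; lia.
- by case: bi => /=; lia.
- by case: bj => /=; lia.
Qed.

Definition rr (D : diagram) (i : nat) : bool := tl (nth a0 D i) < hd (nth a0 D i).
Definition Aof (D : diagram) (i : nat) : ipair :=
  (pe D i (~~ rr D i) - eps D, pe D i (~~ rr D i) + eps D,
   pe D i (rr D i) - eps D, pe D i (rr D i) + eps D).

Lemma twist_ok D i k : (i < size D)%N -> (k = 0 \/ k = sv D i) ->
  twist_arrows (Aof D i) true (rr D i == sgn (nth a0 D i)) k =
  if k != 0 then [:: nth a0 D i] else [::].
Proof.
move=> Hi [->|->]; first by [].
have Ht := pe_tl D i Hi; have Hh := pe_hd D i Hi.
rewrite /twist_arrows /Aof /sv /rr in Ht Hh *.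
case E: (nth a0 D i) Ht Hh => [[t h] s] /= Ht Hh.
have -> : absz (if s then (1:int) else (-1)%R) = 1%N by case: (s).
rewrite /= !mid.
case: (s) => /=; case: (t < h) => /=; rewrite ?Ht ?Hh //.
Qed.

Lemma flat_filter (T S : Type) (g : T -> seq S) (f : T -> S) (P : pred T) (s : seq T) :
  (forall x, g x = if P x then [:: f x] else [::]) ->
  flatten (map g s) = [seq f x | x <- s & P x].
Proof. move=> H; elim: s => //= x s IH; rewrite H IH; by case: (P x). Qed.

Definition WE (E : diagram) (d : diagram) : int := if `[< gd_iso d E >] then 1 else 0.

Lemma coef_ev X E : coef X E = ev (WE E) X.
Proof.
rewrite /coef /ev big_mkcond; apply: eq_bigr => p _ /=; rewrite /WE.
by case: ifP => _; rewrite ?mulr1 ?mulr0.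
Qed.

Theorem lemma6 (m : nat) (D : diagram) :
  (0 < m)%N -> wf_diagram D -> size D = m ->
  exists (Phi : ('I_m -> int) -> diagram) (alpha : 'I_m -> nat) (nu : 'I_m -> bool),
    is_ftl Phi /\
    P_eq (Imap (dpow nu alpha (fun k => [:: (1, Phi k)]) (fun _ => 0)))
         [:: ((-1) ^+ num_neg D, D)].
Proof.
move=> Hm Hw HD.
pose A := fun i : 'I_m => Aof D i.
pose Y := fun _ : 'I_m => true.
pose Z := fun i : 'I_m => rr D i == sgn (nth a0 D i).
pose Phi := ftl [::] A Y Z.
exists Phi, (fun _ => 1%N), (fun i : 'I_m => sgn (nth a0 D i)).
have HPhi : forall z, good D z ->
    Phi z = [seq nth a0 D i | i : 'I_m <- enum 'I_m & z i != 0].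
  move=> z Hz; rewrite /Phi /ftl cat0s; apply: flat_filter => i.
  by apply: twist_ok; rewrite ?HD.
split.
  exists [::], A, Y, Z; split => //; split => //.
  - move=> i; rewrite /A /Aof /=.
    have Hi : (i < size D)%N by rewrite HD.
    have Hp := eps_pos D.
    have Hlt : pe D i (~~ rr D i) < pe D i (rr D i).
      have Hne := pe_neq D i i false true Hw Hi Hi (introT orP (or_intror isT)).
      rewrite (pe_tl D i Hi) (pe_hd D i Hi) in Hne.
      move: (erefl (rr D i)); rewrite {2}/rr; case: (rr D i) => /= Er;
        rewrite (pe_tl D i Hi) (pe_hd D i Hi) //.
      by rewrite lt_neqAle eq_sym Hne /= leNgt -Er.
    rewrite ord_gap ?pe_mem ?HD //.
    apply/andP; split; first lra. lra.
  - move=> i j Hij; rewrite /A /Aof /=.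
    have Hi : (i < size D)%N by rewrite HD.
    have Hj : (j < size D)%N by rewrite HD.
    have Hij' : (nat_of_ord i != nat_of_ord j) by [].
    by rewrite !disj_gap ?pe_mem // pe_neq ?Hij'.
exists [::]; split => // E.
rewrite /= {2}/coef big_nil !coef_ev ev_cat ev_Imap /dpow.
have Hg0 : good D (fun _ : 'I_m => 0) by move=> i; left.
have := claim m D Phi (fun _ => 1%N) (fun i : 'I_m => sgn (nth a0 D i)) (WE E)
   HD HPhi (fun _ => erefl) (fun _ => erefl) m (leqnn m) (fun _ => 0) Hg0 (fun _ _ => erefl).
rewrite subnn drop0 => ->.
rewrite HPhi; last by move=> i; left.
rewrite filt_nil // /= big_seq1 /= /ev big_seq1 /=.
by rewrite drop0 /num_neg mulNr subrr.
Qed.
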